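(* Let $r\geq 3$ and let $D$ be an $m$-colored semicomplete $r$-partite digraph, and let $x,y$ be distinct vertices of $D$. Suppose there exists a directed path from $x$ to $y$ in $D$ that uses exactly $k$ colors for some $k\geq 4$, and suppose there is no directed path from $y$ to $x$ in $D$ using at most $4$ colors. Then $d(x,y)\leq 2$.
   Context: A semicomplete $r$-partite digraph ($r\ge 2$) is a digraph whose vertex set is partitioned into $r$ nonempty independent sets (partite sets) such that for any two vertices $u,v$ in different partite sets at least one of the arcs $(u,v)$, $(v,u)$ is present (both may be present); there are no arcs inside a partite set. An $m$-colored digraph is a digraph whose arcs are each assigned one of $m$ colors. A directed path (no repeated vertices) is $j$-colored if its arcs use exactly $j$ distinct colors; it uses at most $k$ colors if it is $j$-colored for some $1\le j\le k$. $d(x,y)$ denotes the minimum number of arcs of a directed path from $x$ to $y$. *)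

(* Defs.v *)
From mathcomp Require Import all_boot.
Set Implicit Arguments. Unset Strict Implicit. Unset Printing Implicit Defensive.

Definition semicomplete_multipartite (V : finType) (r : nat)
    (arc : rel V) (part : V -> 'I_r) : Prop :=
  [/\ (forall i : 'I_r, exists v : V, part v = i),
      (forall u v : V, part u = part v -> ~~ arc u v)
    & (forall u v : V, part u != part v -> arc u v || arc v u)].

(* A directed path from x to y: vertex sequence x :: p, consecutive vertices
   joined by arcs, ending at y, with no repeated vertex.  Its number of arcs
   is size p. *)
Definition is_dpath (V : finType) (arc : rel V) (x y : V) (p : seq V) : bool :=
  [&& path arc x p, last x p == y & uniq (x :: p)].

Definition path_colors (V : finType) (m : nat) (col : V -> V -> 'I_m)
    (x : V) (p : seq V) : seq 'I_m :=
  undup [seq col e.1 e.2 | e <- zip (x :: p) p].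

Definition ncolors (V : finType) (m : nat) (col : V -> V -> 'I_m)
    (x : V) (p : seq V) : nat := size (path_colors col x p).

(* Main.v *)
Require Import Defs.
From mathcomp Require Import all_boot.

Lemma ncol_bound (V : finType) (m : nat) (col : V -> V -> 'I_m) y p :
  1 <= size p <= 4 -> 1 <= ncolors col y p <= 4.
Proof.
rewrite /ncolors /path_colors.
set s := [seq _ | _ <- _].
have Hs : size s = size p by rewrite size_map size_zip /=; apply/minn_idPr; exact: leqnSn.
case/andP=> h1 h4; apply/andP; split; last first.
  by apply: leq_trans (size_undup s) _; rewrite Hs.
  have : size s != 0 by rewrite Hs -lt0n.
  clear Hs; clearbody s; case: s => [|e s'] // _.
  have : e \in undup (e :: s') by rewrite mem_undup mem_head.
  by case: (undup (e :: s')) => //.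
Qed.

Theorem mainTheorem1 (V : finType) (r m : nat) (arc : rel V) (part : V -> 'I_r)
    (col : V -> V -> 'I_m) (x y : V) :
  3 <= r ->
  semicomplete_multipartite arc part ->
  x != y ->
  (exists k : nat, 4 <= k /\
     exists p : seq V, is_dpath arc x y p /\ ncolors col x p = k) ->
  ~ (exists p : seq V, is_dpath arc y x p /\ 1 <= ncolors col y p <= 4) ->
  exists p : seq V, is_dpath arc x y p /\ size p <= 2.
Proof.
move=> _ [_ indep semi] xy [k [_ [P [HP _]]]] Hno.
have Hno' : forall p, is_dpath arc y x p -> 1 <= size p <= 4 -> False.
  by move=> p Hp Hs; apply: Hno; exists p; split => //; exact: ncol_bound.
have npart : forall u v, arc u v -> part u != part v.
  by move=> u v a; apply/eqP => E; move: (indep u v E); rewrite a.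
have neqp : forall u v, part u != part v -> u != v.
  by move=> u v; apply: contra => /eqP ->.
case Axy: (arc x y).
  by exists [:: y]; rewrite /is_dpath /= inE Axy (negbTE xy) eqxx.
case: (boolP [exists w, arc x w && arc w y]) => [/existsP [w /andP [xw wy]] | Hnw].
  exists [:: w; y]; split => //.
  have h1 := neqp _ _ (npart _ _ xw); have h2 := neqp _ _ (npart _ _ wy).
  by rewrite /is_dpath /= xw wy !inE eqxx (negbTE h1) h2 (negbTE xy).
exfalso.
have nxwy : forall w, arc x w -> arc w y -> False.
  by move=> w a b; move/existsP: Hnw; apply; exists w; rewrite a b.
have Nyx : ~~ arc y x.
  apply/negP => a; apply: (Hno' [:: x]) => //.
  by rewrite /is_dpath /= a inE eq_sym xy eqxx.
have pxy : part y = part x.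
  case: (eqVneq (part y) (part x)) => // /semi; by rewrite Axy (negbTE Nyx).
have G : forall w, arc w y -> part w != part x -> arc w x.
  move=> w wy pw; move: (semi _ _ pw); case/orP => // xw; case: (nxwy w xw wy).
have FA : forall w, part w != part x -> ~~ arc y w -> arc w y /\ arc w x.
  move=> w pw nyw.
  have wy : arc w y by move: (semi w y); rewrite pxy => /(_ pw); rewrite (negbTE nyw) orbF.
  by split => //; apply: G.
have dxy : forall w, part w != part x -> (w != x) && (w != y).
  move=> w pw; rewrite neqp //; rewrite neqp // pxy //.
have P2 : forall a, part a != part x -> arc y a -> arc a x -> False.
  move=> a pa ya ax; apply: (Hno' [:: a; x]) => //.
  move: (dxy a pa) => /andP [ax' ay'].
  rewrite /is_dpath /= ya ax !inE !negb_or eqxx /=.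
  by repeat (apply/andP; split); try done; rewrite eq_sym.
have P3 : forall a b, part a != part x -> part b != part x -> arc y a -> ~~ arc y b ->
    arc a b -> arc b x -> False.
  move=> a b pa pb ya nyb ab bx; apply: (Hno' [:: a; b; x]) => //.
  move: (dxy a pa) (dxy b pb) => /andP [ax' ay'] /andP [bx' by'].
  have anb : a != b by apply/eqP => E; move: nyb; rewrite -E ya.
  rewrite /is_dpath /= ya ab bx !inE !negb_or eqxx /=.
  by repeat (apply/andP; split); try done; rewrite eq_sym.
have P4 : forall a b c, part a != part x -> part b = part x -> b != x -> b != y ->
    part c != part x -> arc y a -> ~~ arc y c ->
    arc a b -> arc b c -> arc c x -> False.
  move=> a b c pa pb bx' by' pc ya nyc ab bc cx; apply: (Hno' [:: a; b; c; x]) => //.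
  move: (dxy a pa) (dxy c pc) => /andP [ax' ay'] /andP [cx' cy'].
  have anc : a != c by apply/eqP => E; move: nyc; rewrite -E ya.
  have anb : a != b by apply: neqp; rewrite pb.
  have bnc : b != c by apply: neqp; rewrite pb eq_sym.
  rewrite /is_dpath /= ya ab bc cx !inE !negb_or eqxx /=.
  by repeat (apply/andP; split); try done; rewrite eq_sym.
have main : forall n q a, size q <= n -> part a != part x -> arc y a ->
    path arc a q -> last a q = y -> False.
  elim=> [|n IH] [|b q] a //= Hs pa ya.
  - by move=> _ E; move: pa; rewrite E pxy eqxx.
  - by move=> _ E; move: pa; rewrite E pxy eqxx.
  case/andP => ab Hq Hl.
  case: (eqVneq (part b) (part x)) => pb.
    case: (eqVneq b x) => bx; first by subst b; apply: (P2 a).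
    case: (eqVneq b y) => byy.
      by subst b; apply: (P2 a) => //; apply: G.
    case: q Hs Hq Hl => [|c q] Hs /=; first by move=> _ E; move: byy; rewrite E eqxx.
    case/andP => bc Hq Hl.
    have pc : part c != part x by rewrite -pb eq_sym; apply: npart.
    case yc: (arc y c).
      by apply: (IH q c) => //; apply: ltnW.
    have [_ cx] := FA c pc (negbT yc).
    by apply: (P4 a b c) => //; rewrite yc.
  case yb: (arc y b); first by apply: (IH q b).
  have [_ bx] := FA b pb (negbT yb).
  by apply: (P3 a b) => //; rewrite yb.
move: HP; rewrite /is_dpath; case: P => [|v P] /=.
  by rewrite (negbTE xy).
case/and5P => /andP [xv Hp] Hl _ _ _.
have pv : part v != part x by rewrite eq_sym; apply: npart.
case yv: (arc y v).
  by apply: (main (size P) P v) => //; apply/eqP.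
have [vy _] := FA v pv (negbT yv).
exact: (nxwy v xv vy).
Qed.
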